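(* Suppose that $t$ is a canonical closed term of $\Psi$ and that $t\rightarrow u$ in $\Psi$. Then there is a natural number $n$ such that: (1) $\langle\!\langle t\rangle\!\rangle_\Psi\rightarrow_h\langle\!\langle u\rangle\!\rangle_\Psi$; (2) there is a canonical term $v$ with $u\rightarrow^n v$; (3) $\#_{\mathbf{app}}(w)=\#_{\mathbf{app}}(u)+m$ whenever $u\rightarrow^m w$ and $m\le n$; (4) $\langle\!\langle w\rangle\!\rangle_\Psi=\langle\!\langle u\rangle\!\rangle_\Psi$ whenever $u\rightarrow^m w$ and $m\le n$.
   Context: $\lambda$-terms: $M::=x\mid\lambda x.M\mid MN$, variables from a set $\Upsilon$ with a fixed total order, $FV(M)$ the ordered sequence of free variables. Weak call-by-name reduction: $(\lambda x.M)N\rightarrow_h M\{N/x\}$, closed under $M\rightarrow_h N\Rightarrow ML\rightarrow_h NL$. $\Psi$: binary function symbol $\mathbf{app}$, binary constructor $\mathbf{capp}$, constructors $c_{x,M}$ ($M$ a $\lambda$-term, $x\in\Upsilon$) of arity the length of $FV(\lambda x.M)$. Translations: $[\![x]\!]'=x$, $[\![\lambda x.M]\!]'=c_{x,M}(x_1,\dots,x_n)$ ($FV(\lambda x.M)=x_1,\dots,x_n$), $[\![MN]\!]'=\mathbf{capp}([\![M]\!]',[\![N]\!]')$; $[\![x]\!]_\Psi=x$, $[\![\lambda x.M]\!]_\Psi=c_{x,M}(x_1,\dots,x_n)$, $[\![MN]\!]_\Psi=\mathbf{app}([\![M]\!]_\Psi,[\![N]\!]')$. Rules (any $\lambda$-term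 $M$, any abstraction or application $N$, distinct variables $z,w$): $\mathbf{app}(c_{z,z},\mathbf{capp}(w,f))\rightarrow\mathbf{app}(w,f)$; $\mathbf{app}(c_{z,z},c_{x,M}(x_1,\dots,x_n))\rightarrow c_{x,M}(x_1,\dots,x_n)$; $\mathbf{app}(c_{z,w}(\mathbf{capp}(f,g)),h)\rightarrow\mathbf{app}(f,g)$; $\mathbf{app}(c_{z,w}(c_{x,M}(x_1,\dots,x_n)),h)\rightarrow c_{x,M}(x_1,\dots,x_n)$; $\mathbf{app}(c_{y,N}(y_1,\dots,y_m),y)\rightarrow[\![N]\!]_\Psi$ ($FV(\lambda y.N)=y_1,\dots,y_m$); $\mathbf{app}(\mathbf{capp}(x,y),z)\rightarrow\mathbf{app}(\mathbf{app}(x,y),z)$. Rewriting is call-by-value: a step replaces anywhere a subterm $l\sigma$ by $r\sigma$, $\sigma$ mapping variables to constructor terms (closed terms built only from constructors, i.e. from $\mathbf{capp}$ and the $c_{x,M}$). Back translation: $\langle\!\langle x\rangle\!\rangle_\Psi=x$, $\langle\!\langle\mathbf{app}(u,v)\rangle\!\rangle_\Psi=\langle\!\langle\mathbf{capp}(u,v)\rangle\!\rangle_\Psi=\langle\!\langle u\rangle\!\rangle_\Psi\langle\!\langle v\rangle\!\rangle_\Psi$, $\langle\!\langle c_{x,M}(t_1,\dots,t_n)\rangle\!\rangle_\Psi=(\lambda x.M)\{\langle\!\langle t_1\rangle\!\rangle_\Psi/x_1,\dots,\langle\!\langle t_n\rangle\!\rangle_\Psi/x_n\}$. A closed term $t$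 is canonical if either $t=c_{x,M}(t_1,\dots,t_n)$ is a constructor term, or $t=\mathbf{app}(u,v)$ with $u$ canonical and $v$ a constructor term. $\#_{\mathbf{app}}(t)$ is the number of occurrences of $\mathbf{app}$ in $t$. *)

(* Defs.v *)
From HB Require Import structures.
From mathcomp Require Import all_boot all_order.
Set Implicit Arguments. Unset Strict Implicit. Unset Printing Implicit Defensive.
Import Order.TTheory.

Section Psi.
Variables (disp : Order.disp_t) (V : orderType disp).

(* lambda-terms (named, not quotiented by alpha) *)
Inductive lterm : Type :=
| Var of V
| Lam of V & lterm
| App of lterm & lterm.

Fixpoint fv_raw (M : lterm) : seq V :=
  match M with
  | Var x => [:: x]
  | Lam x M => filter (predC1 x) (fv_raw M)
  | App M N => fv_raw M ++ fv_raw N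
  end.

Definition fv (M : lterm) : seq V := sort (fun a b => (a <= b)%O) (undup (fv_raw M)).

Fixpoint lookup (s : seq (V * lterm)) (x : V) : option lterm :=
  match s with
  | [::] => None
  | p :: s' => if x == p.1 then Some p.2 else lookup s' x
  end.

(* simultaneous substitution; it is only ever applied with closed terms
   substituted, where it coincides with capture-avoiding substitution *)
Fixpoint msubst (s : seq (V * lterm)) (M : lterm) : lterm :=
  match M with
  | Var x => if lookup s x is Some N then N else Var x
  | Lam y M => Lam y (msubst (filter (fun p => p.1 != y) s) M)
  | App M N => App (msubst s M) (msubst s N)
  end.

Definition subst (M : lterm) (x : V) (N : lterm) : lterm := msubst [:: (x, N)] M.

Inductive hred : lterm -> lterm -> Prop :=
| hred_beta x M N : hred (App (Lam x M) N) (subst M x N)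
| hred_app M N L : hred M N -> hred (App M L) (App N L).

(* terms of the constructor rewrite system Psi:
   PApp = app, PCapp = capp, PC x M ts = c_{x,M}(ts) *)
Inductive pterm : Type :=
| PVar of V
| PApp of pterm & pterm
| PCapp of pterm & pterm
| PC of V & lterm & seq pterm.

Fixpoint trc (M : lterm) : pterm :=
  match M with
  | Var x => PVar x
  | Lam x M' => PC x M' (map PVar (fv (Lam x M')))
  | App M N => PCapp (trc M) (trc N)
  end.

Fixpoint trPsi (M : lterm) : pterm :=
  match M with
  | Var x => PVar x
  | Lam x M' => PC x M' (map PVar (fv (Lam x M')))
  | App M N => PApp (trPsi M) (trc N)
  end.

Fixpoint psubst (sigma : V -> pterm) (t : pterm) : pterm :=
  match t with
  | PVar x => sigma x
  | PApp a b => PApp (psubst sigma a) (psubst sigma b)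
  | PCapp a b => PCapp (psubst sigma a) (psubst sigma b)
  | PC x M ts => PC x M (map (psubst sigma) ts)
  end.

Fixpoint assoc (xs : seq V) (ts : seq pterm) (v : V) : pterm :=
  match xs, ts with
  | x :: xs', t :: ts' => if v == x then t else assoc xs' ts' v
  | _, _ => PVar v
  end.

Fixpoint In_seq (t : pterm) (ts : seq pterm) : Prop :=
  if ts is t' :: ts' then t' = t \/ In_seq t ts' else False.

Inductive is_cterm : pterm -> Prop :=
| ct_capp t u : is_cterm t -> is_cterm u -> is_cterm (PCapp t u)
| ct_c x M ts : size ts = size (fv (Lam x M)) ->
    (forall t, In_seq t ts -> is_cterm t) -> is_cterm (PC x M ts).

Inductive canonical : pterm -> Prop :=
| can_c x M ts : is_cterm (PC x M ts) -> canonical (PC x M ts)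
| can_app u v : canonical u -> is_cterm v -> canonical (PApp u v).

Definition not_var (N : lterm) : Prop := if N is Var _ then False else True.

(* instances l sigma -> r sigma of the rules of Psi, sigma mapping
   variables to constructor terms *)
Inductive rstep : pterm -> pterm -> Prop :=
| rule1 z w f : is_cterm w -> is_cterm f ->
    rstep (PApp (PC z (Var z) [::]) (PCapp w f)) (PApp w f)
| rule2 z x M ts : is_cterm (PC x M ts) ->
    rstep (PApp (PC z (Var z) [::]) (PC x M ts)) (PC x M ts)
| rule3 z w f g h : z != w -> is_cterm f -> is_cterm g -> is_cterm h ->
    rstep (PApp (PC z (Var w) [:: PCapp f g]) h) (PApp f g)
| rule4 z w x M ts h : z != w -> is_cterm (PC x M ts) -> is_cterm h ->
    rstep (PApp (PC z (Var w) [:: PC x M ts]) h) (PC x M ts)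
| rule5 y N ts s : not_var N -> is_cterm (PC y N ts) -> is_cterm s ->
    rstep (PApp (PC y N ts) s)
          (psubst (fun v => if v == y then s else assoc (fv (Lam y N)) ts v)
                  (trPsi N))
| rule6 a b c : is_cterm a -> is_cterm b -> is_cterm c ->
    rstep (PApp (PCapp a b) c) (PApp (PApp a b) c).

Inductive step : pterm -> pterm -> Prop :=
| step_root t u : rstep t u -> step t u
| step_appl t t' u : step t t' -> step (PApp t u) (PApp t' u)
| step_appr t u u' : step u u' -> step (PApp t u) (PApp t u')
| step_cappl t t' u : step t t' -> step (PCapp t u) (PCapp t' u)
| step_cappr t u u' : step u u' -> step (PCapp t u) (PCapp t u')
| step_c x M ts1 t t' ts2 : step t t' ->
    step (PC x M (ts1 ++ t :: ts2)) (PC x M (ts1 ++ t' :: ts2)).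

Inductive nsteps : nat -> pterm -> pterm -> Prop :=
| nsteps0 t : nsteps 0 t t
| nstepsS n t u v : step t u -> nsteps n u v -> nsteps n.+1 t v.

Fixpoint napp (t : pterm) : nat :=
  match t with
  | PVar _ => 0
  | PApp a b => (napp a + napp b).+1
  | PCapp a b => napp a + napp b
  | PC _ _ ts => sumn (map napp ts)
  end.

Fixpoint back (t : pterm) : lterm :=
  match t with
  | PVar x => Var x
  | PApp a b => App (back a) (back b)
  | PCapp a b => App (back a) (back b)
  | PC x M ts => msubst (zip (fv (Lam x M)) (map back ts)) (Lam x M)
  end.

End Psi.

(* Main.v *)
Require Import Defs.
From mathcomp Require Import all_boot all_order.

Section Aux.
Variables (disp : Order.disp_t) (V : orderType disp).
Implicit Types (s : seq (V * lterm V)) (M N : lterm V).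

Lemma mem_fv (L : lterm V) x : (x \in fv L) = (x \in fv_raw L).
Proof. by rewrite /fv mem_sort mem_undup. Qed.

Lemma lookup_filter s y x :
  lookup (filter (fun p => p.1 != y) s) x = if x == y then None else lookup s x.
Proof.
elim: s => [|[a b] s IH] /=; first by case: (x == y).
case: (eqVneq a y) => [->|ne] /=.
  by rewrite IH; case: (x == y).
rewrite IH; case: (eqVneq x y) => [->|nxy]; last by [].
have -> : (y == a) = false by rewrite eq_sym (negPf ne).
by [] || rewrite eqxx.
Qed.

Lemma lookup_cat s1 s2 x :
  lookup (s1 ++ s2) x = if lookup s1 x is Some N then Some N else lookup s2 x.
Proof. by elim: s1 => [|[a b] s IH] //=; case: (x == a). Qed.

Lemma msubst_ext (K : lterm V) s1 s2 :
  (forall z, z \in fv_raw K -> lookup s1 z = lookup s2 z) -> msubst s1 K = msubst s2 K.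
Proof.
elim: K s1 s2 => [x|y M IH|M IHM N IHN] s1 s2 H /=.
- by rewrite H // inE.
- congr Lam; apply: IH => z zM; rewrite !lookup_filter.
  case: (eqVneq z y) => // nzy; apply: H; by rewrite /= mem_filter /= nzy.
- by rewrite (IHM s1 s2) ?(IHN s1 s2) // => z Hz; apply: H; rewrite /= mem_cat Hz ?orbT.
Qed.

Lemma msubst_nil (K : lterm V) : msubst [::] K = K.
Proof. by elim: K => [x|y M IH|M IHM N IHN] //=; rewrite ?IH ?IHM ?IHN. Qed.

Lemma closed_msubst s N : fv_raw N = [::] -> msubst s N = N.
Proof. by move=> H; rewrite (@msubst_ext N s [::]) ?msubst_nil // => z; rewrite H. Qed.

Definition envc s := forall x N, lookup s x = Some N -> fv_raw N = [::].

Lemma envc_filter s y : envc s -> envc (filter (fun p => p.1 != y) s).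
Proof. by move=> H x N; rewrite lookup_filter; case: (x == y) => //; apply: H. Qed.

Lemma msubst_comp (M : lterm V) s1 s2 : envc s2 ->
  msubst s1 (msubst s2 M) = msubst (s2 ++ s1) M.
Proof.
elim: M s1 s2 => [x|y M IH|M IHM N IHN] s1 s2 H /=.
- rewrite lookup_cat; case HE: (lookup s2 x) => [N|] //.
  by apply: closed_msubst; apply: (H x); exact HE.
- by rewrite IH ?filter_cat //; apply: envc_filter.
- by rewrite IHM ?IHN.
Qed.

Lemma fvm (M : lterm V) s : envc s -> forall x, x \in fv_raw (msubst s M) ->
  x \in fv_raw M /\ lookup s x = None.
Proof.
elim: M s => [y|y M IH|M IHM N IHN] s H x /=.
- case HE: (lookup s y) => [N|]; first by rewrite (H y N HE).
  by move=> /=; rewrite mem_seq1 => /eqP ->; rewrite eqxx.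
- rewrite mem_filter => /andP [/= nxy /(IH _ (@envc_filter s y H))] [xM].
  by rewrite lookup_filter (negPf nxy) mem_filter /= nxy xM.
- rewrite mem_cat => /orP [/(IHM _ H) [h1 h2]|/(IHN _ H) [h1 h2]];
  by rewrite mem_cat h1 ?orbT.
Qed.

Lemma In_seq_cat (t : pterm V) (l1 l2 : seq (pterm V)) : In_seq t (l1 ++ t :: l2).
Proof. by elim: l1 => [|a l IH] /=; [left|right]. Qed.

Lemma In_seq_map (f : V -> pterm V) t (l : seq V) :
  In_seq t (map f l) -> exists2 v, v \in l & t = f v.
Proof.
elim: l => [|a l IH] //= [<-|/IH [v vl ->]]; first by exists a; rewrite ?inE ?eqxx.
by exists v; rewrite // inE vl orbT.
Qed.

Lemma lookup_zip_in xs (ts : seq (pterm V)) x N :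
  lookup (zip xs (map (@back _ _) ts)) x = Some N -> exists t, In_seq t ts /\ N = back t.
Proof.
elim: xs ts => [|a xs IH] [|t ts] //=.
case: (x == a) => [[<-]|/IH [t' [h1 h2]]]; first by exists t; split=> //; left.
by exists t'; split=> //; right.
Qed.

Lemma lookup_zip_some xs (ys : seq (lterm V)) x :
  x \in xs -> size xs = size ys -> exists N, lookup (zip xs ys) x = Some N.
Proof.
elim: xs ys => [|a xs IH] [|y ys] //= xin [sz].
case: (eqVneq x a) => [_|nxa]; first by exists y.
by apply: IH => //; move: xin; rewrite inE (negPf nxa).
Qed.

Lemma lookup_zip_assoc xs (ts : seq (pterm V)) x :
  x \in xs -> size xs = size ts ->
  lookup (zip xs (map (@back _ _) ts)) x = Some (back (assoc xs ts x)).
Proof.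
elim: xs ts => [|a xs IH] [|t ts] //= xin [sz].
case: (eqVneq x a) => [//|nxa].
by apply: IH => //; move: xin; rewrite inE (negPf nxa).
Qed.

Lemma assoc_in xs (ts : seq (pterm V)) x :
  x \in xs -> size xs = size ts -> In_seq (assoc xs ts x) ts.
Proof.
elim: xs ts => [|a xs IH] [|t ts] //= xin [sz].
case: (eqVneq x a) => [_|nxa]; first by left.
by right; apply: IH => //; move: xin; rewrite inE (negPf nxa).
Qed.

Lemma lookup_zip_map (f : V -> lterm V) xs x :
  x \in xs -> lookup (zip xs (map f xs)) x = Some (f x).
Proof.
elim: xs => [|a xs IH] //=; rewrite inE.
by case: (eqVneq x a) => [->|nxa] //= /IH.
Qed.

Lemma back_closed (c : pterm V) : is_cterm c -> fv_raw (back c) = [::].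
Proof.
elim=> [a b _ Ha _ Hb|x M ts Hsz _ IH]; first by rewrite /= Ha Hb.
rewrite [back _]/=.
have Hc : envc (zip (fv (Lam x M)) (map (@back _ _) ts)).
  by move=> z N /lookup_zip_in [t [Ht ->]]; apply: IH.
case E: (fv_raw (msubst (zip (fv (Lam x M)) (map (@back _ _) ts)) (Lam x M))) => [|z l] //.
have : z \in fv_raw (msubst (zip (fv (Lam x M)) (map (@back _ _) ts)) (Lam x M)).
  by rewrite E inE eqxx.
move=> /(fvm _ _ Hc) [zin hn].
have zf : z \in fv (Lam x M) by rewrite mem_fv.
have sz : size (fv (Lam x M)) = size (map (@back _ _) ts) by rewrite size_map Hsz.
have [N' hN] := lookup_zip_some _ _ _ zf sz.
by rewrite hN in hn.
Qed.


Lemma map_psubst_PVar (sigma : V -> pterm V) (l : seq V) :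
  map (psubst sigma) (map (@PVar _ _) l) = map sigma l.
Proof. by elim: l => [|a l IH] //=; rewrite IH. Qed.

Lemma cterm_nostep (t u : pterm V) : is_cterm t -> step t u -> False.
Proof.
move=> Ht Hs; elim: Hs Ht => {t u}.
- by move=> t u Hr Hc; inversion Hr; subst; inversion Hc.
- by move=> t t' u _ _ Hc; inversion Hc.
- by move=> t t' u _ _ Hc; inversion Hc.
- by move=> t t' u _ IH Hc; inversion Hc; apply: IH.
- by move=> t t' u _ IH Hc; inversion Hc; apply: IH.
- move=> x M ts1 t t' ts2 _ IH Hc; inversion Hc; subst.
  by apply: IH; apply: H3; apply: In_seq_cat.
Qed.

Inductive spn : pterm V -> Prop :=
| spn_h h : is_cterm h -> spn h
| spn_a (q c : pterm V) : spn q -> is_cterm c -> spn (PApp q c).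

Definition notbare (s : pterm V) := if s is PCapp _ _ then False else True.

Fixpoint phead (s : pterm V) := if s is PApp a _ then phead a else s.
Fixpoint caps (s : pterm V) := if s is PCapp a _ then (caps a).+1 else 0.
Fixpoint fire (s : pterm V) :=
  match s with
  | PApp s1 c => match s1 with
                 | PCapp a b => PApp (PApp a b) c
                 | _ => PApp (fire s1) c end
  | _ => s end.

Lemma trans_sp (L : lterm V) (sigma : V -> pterm V) :
  (forall v, v \in fv_raw L -> is_cterm (sigma v)) ->
  is_cterm (psubst sigma (trc L)) /\ spn (psubst sigma (trPsi L)) /\
  (not_var L -> notbare (psubst sigma (trPsi L))).
Proof.
elim: L => [x|x M IH|M IHM N IHN] H /=.
- have Hx : is_cterm (sigma x) by apply: H; rewrite /= inE.
  by split=> //; split=> //; constructor.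
- have Hc : is_cterm (PC x M (map sigma (fv (Lam x M)))).
    constructor; first by rewrite size_map.
    move=> t /In_seq_map [v vin ->]; apply: H; by rewrite -mem_fv.
  by rewrite map_psubst_PVar; split=> //; split=> //; constructor.
- have HM : forall v, v \in fv_raw M -> is_cterm (sigma v).
    by move=> v vin; apply: H; rewrite /= mem_cat vin.
  have HN : forall v, v \in fv_raw N -> is_cterm (sigma v).
    by move=> v vin; apply: H; rewrite /= mem_cat vin orbT.
  have [c1 [s1 _]] := IHM HM; have [c2 [s2 _]] := IHN HN.
  split; first by constructor.
  by split=> //; constructor.
Qed.

Lemma back_trans (L : lterm V) (sigma : V -> pterm V) E :
  (forall v, v \in fv_raw L -> lookup E v = Some (back (sigma v))) ->
  back (psubst sigma (trc L)) = msubst E L /\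
  back (psubst sigma (trPsi L)) = msubst E L.
Proof.
elim: L => [x|x M IH|M IHM N IHN] H.
- by rewrite /= H // inE.
- rewrite /= map_psubst_PVar -map_comp.
  have e : msubst (zip (fv (Lam x M)) (map (fun v => back (sigma v)) (fv (Lam x M)))) (Lam x M)
           = msubst E (Lam x M).
    apply: msubst_ext => z zin.
    rewrite lookup_zip_map ?mem_fv // H //.
  by split; exact: e.
- have HM : forall v, v \in fv_raw M -> lookup E v = Some (back (sigma v)).
    by move=> v vin; apply: H; rewrite /= mem_cat vin.
  have HN : forall v, v \in fv_raw N -> lookup E v = Some (back (sigma v)).
    by move=> v vin; apply: H; rewrite /= mem_cat vin orbT.
  have [e1 e2] := IHM HM; have [e3 e4] := IHN HN.
  by rewrite /= e1 e2 e3.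
Qed.


Definition isapp (q : pterm V) := if q is PApp _ _ then True else False.

Lemma fireP (q : pterm V) a b : spn q -> isapp q -> phead q = PCapp a b ->
  [/\ step q (fire q), (forall q', step q q' -> q' = fire q), spn (fire q),
      isapp (fire q) &
      [/\ phead (fire q) = phead a, napp (fire q) = (napp q).+1 & back (fire q) = back q]].
Proof.
elim: q => [x|q1 IH1 c _|q1 _ q2 _|x M ts] // Hs _ Hh.
have [Hs1 Hc] : spn q1 /\ is_cterm c.
  by inversion Hs; subst; [inversion H|].
case: q1 IH1 Hs1 Hh Hs => [y|q11 q12|a' b'|y M ts] IH1 Hs1 Hh Hs //=.
- have [st uq sp ia [ph na ba]] := IH1 Hs1 I Hh.
  split=> //.
  + by apply: step_appl.
  + move=> q' Hq'; inversion Hq'; subst.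
    * by inversion H.
    * by rewrite (uq _ H2).
    * by case: (cterm_nostep _ _ Hc H2).
  + by constructor.
  + by split=> //=; rewrite ?na ?ba.
- case: Hh => ea eb; subst a' b'.
  have [Ha Hb] : is_cterm a /\ is_cterm b.
    inversion Hs1 as [h Hh0|]; subst; inversion Hh0; subst; split; assumption.
  split.
  + by apply: step_root; apply: rule6.
  + move=> q' Hq'; inversion Hq'; subst.
    * by inversion H.
    * by case: (@cterm_nostep (PCapp a b) t' (ct_capp Ha Hb) H2).
    * by case: (cterm_nostep _ _ Hc H2).
  + by constructor; [constructor; [constructor|]|].
  + by [].
  + by split=> //=; rewrite addnA -addSn.
Qed.

Lemma cterm_head (h : pterm V) : is_cterm h -> phead h = h.
Proof. by case. Qed.

Lemma spn_head (q : pterm V) : spn q -> is_cterm (phead q).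
Proof. by elim=> [h Hh|q' c _ IH _] //=; rewrite cterm_head. Qed.

Lemma spn_can (q : pterm V) : spn q -> notbare q -> caps (phead q) = 0 -> canonical q.
Proof.
elim=> [h Hh|q' c Hq IH Hc] Hn Hcap.
- by case: Hh Hn Hcap => // x M ts Hsz Hts _ _; constructor; constructor.
- constructor=> //; apply: IH => //.
  by case: q' Hq Hcap Hn => //= a b _.
Qed.

Lemma nsteps0E (q w : pterm V) : nsteps 0 q w -> w = q.
Proof. by move=> H; inversion H. Qed.

Lemma spineD k : forall q : pterm V, spn q -> notbare q -> caps (phead q) = k ->
  (exists v, canonical v /\ nsteps k q v) /\
  (forall m w, m <= k -> nsteps m q w -> napp w = napp q + m /\ back w = back q).
Proof.
elim: k => [|k IH] q Hs Hn Hk.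
  split; first by exists q; split; [apply: spn_can|constructor].
  move=> m w; rewrite leqn0 => /eqP -> /nsteps0E ->; by rewrite addn0.
have Hhc := spn_head _ Hs.
case Eh: (phead q) Hk Hhc => [x|q1 q2|a b|x M ts] //= [Hk] Hhc.
have Hia : isapp q.
  by case: q Hs Hn Eh {IH} => //= a' b' _ _ [].
have [st uq sp ia [ph na ba]] := fireP _ _ _ Hs Hia Eh.
have Ha : is_cterm a by inversion Hhc.
have nb : notbare (fire q) by case: (fire q) ia.
have ck : caps (phead (fire q)) = k by rewrite ph cterm_head.
have [[v [Hv Hnv]] Hall] := IH (fire q) sp nb ck.
split; first by exists v; split=> //; apply: nstepsS Hnv.
move=> [|m] w Hm Hw.
  by rewrite (nsteps0E _ _ Hw) addn0.
inversion Hw; subst.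
have e := uq _ H0; subst.
have [h1 h2] := Hall m w Hm H1.
by rewrite h1 h2 na ba addSnnS.
Qed.


Lemma beta' x M N (R : lterm V) : R = subst M x N -> hred (App (Lam x M) N) R.
Proof. by move=> ->; constructor. Qed.

Lemma backc1 z w (c : pterm V) : z != w -> size [:: c] = size (fv (Lam z (Var w))) ->
  back (PC z (Var w) [:: c]) = Lam z (back c).
Proof.
move=> Hzw Hsz.
have win : w \in fv (Lam z (Var w)).
  by rewrite mem_fv /= eq_sym Hzw inE.
have Ef : fv (Lam z (Var w)) = [:: w].
  by move: Hsz win; case: (fv _) => [|a [|]] //= _; rewrite inE => /eqP ->.
rewrite /= Ef /=.
have -> : (w != z) by rewrite eq_sym.
by rewrite /= eqxx.
Qed.

Lemma back_app (a b : pterm V) : back (PApp a b) = App (back a) (back b).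
Proof. by []. Qed.

Lemma back_c0 z : back (PC z (Var z) [::]) = Lam z (Var (V:=V) z).
Proof. by rewrite /=; case: (fv _). Qed.

Lemma rootL (t1 v u : pterm V) : canonical t1 -> is_cterm v -> rstep (PApp t1 v) u ->
  hred (back (PApp t1 v)) (back u) /\ spn u /\ notbare u.
Proof.
move=> Hc1 Hv Hr.
inversion Hr as [z w f Hw Hf|z x M ts Hct|z w f g h Hzw Hf Hg Hh|z w x M ts h Hzw Hct Hh
                |y N ts sv Hnv Hct Hsv|a b c Ha Hb Hc]; subst.
- split; last by split=> //; constructor; [constructor|].
  rewrite back_app back_c0; apply: beta'.
  by rewrite /subst /= eqxx.
- split; last by split=> //; constructor.
  rewrite back_app back_c0; apply: beta'.
  by rewrite /subst /= eqxx.
- split; last by split=> //; constructor; [constructor|].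
  have Hc : is_cterm (PCapp f g) by constructor.
  inversion Hc1 as [a b c Hct|]; subst.
  inversion Hct as [|a b c Hsz Hts]; subst.
  rewrite back_app backc1 //; apply: beta'.
  by rewrite /subst closed_msubst // (back_closed _ Hc).
- split; last by split=> //; constructor.
  inversion Hc1 as [a b c Hct'|]; subst.
  inversion Hct' as [|a b c Hsz Hts]; subst.
  rewrite back_app backc1 //; apply: beta'.
  by rewrite /subst closed_msubst // (back_closed _ Hct).
- inversion Hct as [|a b c Hsz Hts]; subst.
  set sigma := (fun v0 => if v0 == y then v else assoc (fv (Lam y N)) ts v0).
  have Hsig : forall v0, v0 \in fv_raw N -> is_cterm (sigma v0).
    move=> v0 vin; rewrite /sigma; case: (eqVneq v0 y) => [//|nvy].
    apply: Hts; apply: assoc_in => //.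
    by rewrite mem_fv /= mem_filter /= nvy.
  have [_ [Hsp Hnb]] := trans_sp N sigma Hsig.
  split; last by split=> //; apply: Hnb.
  set S := filter (fun p => p.1 != y) (zip (fv (Lam y N)) (map (@back _ _) ts)).
  change (back (PApp (PC y N ts) v)) with (App (Lam y (msubst S N)) (back v)).
  apply: beta'.
  have HS : envc S.
    move=> x0 N0; rewrite /S lookup_filter; case: (x0 == y) => //.
    move=> /lookup_zip_in [t0 [Ht0 ->]]; apply: back_closed; exact: Hts.
  rewrite /subst msubst_comp //.
  apply: (proj2 (back_trans N sigma _ _)) => v0 vin.
  rewrite lookup_cat /S lookup_filter /sigma.
  case: (eqVneq v0 y) => [->|nvy] /=; first by rewrite eqxx.
  rewrite lookup_zip_assoc //.
  by rewrite mem_fv /= mem_filter /= nvy.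
- by inversion Hc1.
Qed.

Lemma mainL (t u : pterm V) : canonical t -> step t u ->
  hred (back t) (back u) /\ spn u /\ notbare u.
Proof.
move=> Hc; elim: Hc u => [x M ts Hct|t1 v Hc1 IH Hv] u Hs.
  by case: (cterm_nostep _ _ Hct Hs).
inversion Hs; subst.
- exact: rootL.
- have [h1 [h2 h3]] := IH _ H2.
  split; first by constructor.
  by split=> //; constructor.
- by case: (cterm_nostep _ _ Hv H2).
Qed.

End Aux.

Theorem lemma15 (disp : Order.disp_t) (V : orderType disp) (t u : pterm V) :
  canonical t -> step t u ->
  exists n : nat,
    hred (back t) (back u) /\
    (exists v, canonical v /\ nsteps n u v) /\
    (forall (m : nat) (w : pterm V), m <= n -> nsteps m u w -> napp w = napp u + m) /\
    (forall (m : nat) (w : pterm V), m <= n -> nsteps m u w -> back w = back u).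
Proof.
move=> Hc Hs.
have [Hh [Hsp Hnb]] := @mainL disp V t u Hc Hs.
have [Hex Hall] := @spineD disp V _ u Hsp Hnb erefl.
eexists; split; [exact: Hh|split; [exact: Hex|split]].
- by move=> m w Hm Hw; case: (Hall m w Hm Hw).
- by move=> m w Hm Hw; case: (Hall m w Hm Hw).
Qed.
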